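(* For a Polish group $G$, every $K_\sigma$ subgroup of $G$ is compactly generated if and only if every countable subgroup of $G$ is compactly generated.
   Context: A subgroup $H$ of a topological group $G$ is compactly generated if $H=\langle K\rangle$ (the subgroup generated by $K$) for some compact $K\subseteq G$; it is $K_\sigma$ if it is a countable union of compact sets. *)

(* Defs.v *)
From HB Require Import structures.
From mathcomp Require Import all_boot all_order all_algebra.
From mathcomp Require Import all_classical all_reals all_analysis.
From mathcomp Require Import Rstruct Rstruct_topology.
Set Implicit Arguments. Unset Strict Implicit. Unset Printing Implicit Defensive.
Import Order.TTheory GRing.Theory Num.Theory.
Local Open Scope classical_set_scope.
Local Open Scope ring_scope.

Definition topological_group (G : topologicalType)
  (mul : G -> G -> G) (inv : G -> G) (e : G) : Prop :=
  [/\ (forall x y z, mul x (mul y z) = mul (mul x y) z),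
      (forall x, mul e x = x /\ mul x e = x),
      (forall x, mul (inv x) x = e /\ mul x (inv x) = e),
      continuous (fun p : G * G => mul p.1 p.2) &
      continuous inv].

Definition separable_space (T : topologicalType) : Prop :=
  exists D : set T, countable D /\ closure D = setT.

Definition completely_metrizable (T : topologicalType) : Prop :=
  exists d : T -> T -> Rdefinitions.R,
  [/\ (forall x y, 0 <= d x y /\ (d x y = 0 <-> x = y)),
      (forall x y, d x y = d y x),
      (forall x y z, d x z <= d x y + d y z),
      (forall A : set T, open A <->
          (forall x, A x -> exists2 r : Rdefinitions.R, 0 < r &
                            [set y | d x y < r] `<=` A)) &
      (forall u : nat -> T,
          (forall r : Rdefinitions.R, 0 < r -> exists N : nat,
              forall m n, (N <= m)%N -> (N <= n)%N -> d (u m) (u n) < r) ->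
          exists x : T, u @ \oo --> x)].

Definition polish_space (T : topologicalType) : Prop :=
  separable_space T /\ completely_metrizable T.

Section Subgroups.
Variables (G : topologicalType) (mul : G -> G -> G) (inv : G -> G) (e : G).

Definition is_subgroup (H : set G) : Prop :=
  [/\ H e, (forall x y, H x -> H y -> H (mul x y)) & (forall x, H x -> H (inv x))].

Definition generated_subgroup (A : set G) : set G :=
  [set x | forall H : set G, is_subgroup H -> A `<=` H -> H x].

Definition compactly_generated (H : set G) : Prop :=
  exists K : set G, compact K /\ generated_subgroup K = H.

Definition K_sigma (H : set G) : Prop :=
  exists K : nat -> set G, (forall n, compact (K n)) /\ \bigcup_n K n = H.
End Subgroups.

(* Main.v *)
Require Import Defs.
From HB Require Import structures.
From mathcomp Require Import all_boot all_order all_algebra.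
From mathcomp Require Import all_classical all_reals all_analysis.
From mathcomp Require Import Rstruct Rstruct_topology finmap.
Set Implicit Arguments. Unset Strict Implicit.
Import Order.TTheory GRing.Theory Num.Theory.
Local Open Scope classical_set_scope.
Local Open Scope ring_scope.

Section Grp.
Variables (G : topologicalType) (mul : G -> G -> G) (inv : G -> G) (e : G).
Hypothesis Hg : topological_group mul inv e.

Lemma mulA x y z : mul x (mul y z) = mul (mul x y) z.
Proof. by case: Hg. Qed.
Lemma mul1g x : mul e x = x. Proof. by case: Hg => _ /(_ x) []. Qed.
Lemma mulg1 x : mul x e = x. Proof. by case: Hg => _ /(_ x) []. Qed.
Lemma mulVg x : mul (inv x) x = e. Proof. by case: Hg => _ _ /(_ x) []. Qed.
Lemma mulgV x : mul x (inv x) = e. Proof. by case: Hg => _ _ /(_ x) []. Qed.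
Lemma mulKg x y : mul (inv x) (mul x y) = y.
Proof. by rewrite mulA mulVg mul1g. Qed.
Lemma mulKVg x y : mul x (mul (inv x) y) = y.
Proof. by rewrite mulA mulgV mul1g. Qed.
Lemma invK x : inv (inv x) = x.
Proof. by rewrite -[LHS]mulg1 -(mulVg x) mulA mulVg mul1g. Qed.
Lemma invM x y : inv (mul x y) = mul (inv y) (inv x).
Proof.
have h : e = mul (mul x y) (mul (inv y) (inv x)).
  by rewrite -mulA mulKVg mulgV.
by rewrite -[LHS]mulg1 {1}h mulA mulVg mul1g.
Qed.

Lemma mul_cont (T : topologicalType) (f g : T -> G) :
  continuous f -> continuous g -> continuous (fun x => mul (f x) (g x)).
Proof.
move=> cf cg x.
have cm : continuous (fun p : G * G => mul p.1 p.2) by case: Hg.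
apply: (continuous_comp (f := fun x => (f x, g x)) (g := fun p : G * G => mul p.1 p.2)); last exact: cm.
exact: (cvg_pair (cf x) (cg x)).
Qed.

Lemma inv_cont : continuous inv. Proof. by case: Hg. Qed.

Definition gen := generated_subgroup mul inv e.
Definition subg := is_subgroup mul inv e.

Lemma gen_subg A : subg (gen A).
Proof.
split.
- by move=> H [].
- by move=> x y gx gy H sH AH; case: (sH) => _ hm _; apply: hm; [apply: gx|apply: gy].
- by move=> x gx H sH AH; case: (sH) => _ _ hi; apply: hi; apply: gx.
Qed.
Lemma gen_incl A : A `<=` gen A.
Proof. by move=> x Ax H _; apply. Qed.
Lemma gen_min A H : subg H -> A `<=` H -> gen A `<=` H.
Proof. by move=> sH AH x; apply. Qed.

Section Met.
Variable d : G -> G -> Rdefinitions.R.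
Hypothesis dpos : forall x y, 0 <= d x y /\ (d x y = 0 <-> x = y).
Hypothesis dsym : forall x y, d x y = d y x.
Hypothesis dtri : forall x y z, d x z <= d x y + d y z.
Hypothesis dopen : forall A : set G, open A <->
          (forall x, A x -> exists2 r : Rdefinitions.R, 0 < r &
                            [set y | d x y < r] `<=` A).

Lemma dxx x : d x x = 0. Proof. by apply/(proj2 (dpos x x)). Qed.

Lemma ball_open x r : open [set y | d x y < r].
Proof.
apply/dopen => y /= hy; exists (r - d x y); first by rewrite subr_gt0.
move=> z /= hz; have := dtri x y z; rewrite ltrBrDl in hz.
move=> h; exact: (le_lt_trans h).
Qed.

Lemma cball_closed x r : closed [set y | d x y <= r].
Proof.
rewrite -openC; apply/dopen => y /= hy.
have hy' : r < d x y by rewrite ltNge; apply/negP.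
exists (d x y - r); first by rewrite subr_gt0.
move=> z /= hz hzr; have := dtri x z y; rewrite (dsym z y).
move=> h; have : d x y < r + (d x y - r) by apply: (le_lt_trans h); exact: ler_ltD.
by rewrite addrC subrK ltxx.
Qed.

Lemma nbhs_ball x U : nbhs x U -> exists2 r : Rdefinitions.R, 0 < r & [set y | d x y < r] `<=` U.
Proof.
rewrite nbhsE => -[B [oB Bx] BU].
have [r r0 rB] := (proj1 (dopen B)) oB x Bx.
by exists r => // y /rB /BU.
Qed.

Fixpoint Tu (S : nat -> set G) (N : nat) : set G :=
  match N with 0 => S 0%N | N'.+1 => Tu S N' `|` S N end.

Lemma Tu_compact S N : (forall n, compact (S n)) -> compact (Tu S N).
Proof. by move=> cS; elim: N => [|N IH] //=; apply: compactU. Qed.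

Lemma Tu_in S N n y : (n <= N)%N -> S n y -> Tu S N y.
Proof.
elim: N => [|N IH] /=; first by rewrite leqn0 => /eqP ->.
rewrite leq_eqVlt => /orP[/eqP -> |]; first by right.
by rewrite ltnS => /IH h /h; left.
Qed.

Lemma Tu_sub S N : Tu S N `<=` \bigcup_n S n.
Proof. by elim: N => [|N IH] /= y; [exists 0%N|case=> [/IH|h]; last exists N.+1]. Qed.

Lemma shrink_compact (S : nat -> set G) : (forall n, compact (S n)) ->
  (forall n y, S n y -> d e y <= (n.+1%:R)^-1) ->
  compact ([set e] `|` \bigcup_n S n).
Proof.
move=> cS hS F PF FS.
case: (pselect (cluster F e)) => [ce|nce]; first by exists e; split => //; left.
have [A [B [FA nB AB]]] : exists A B, [/\ F A, nbhs e B & A `&` B = set0].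
  apply: contra_notP nce => h A B FA nB; apply/set0P/eqP => AB0.
  by apply: h; exists A, B.
have [r r0 rB] := nbhs_ball nB.
pose N := Num.truncn r^-1.
have hN : (N.+1%:R)^-1 < r.
  by rewrite invf_plt ?posrE // archimedean.Num.Theory.truncnS_gt.
have FT : F (Tu S N).
  apply: filterS (filterI FA FS) => y [Ay]; case => [ye|[n _ Sny]].
    exfalso; move: AB; rewrite -subset0 => /(_ y) h; apply: h; split => //.
    apply: (rB y) => /=; rewrite ye dxx //.
  case: (leqP n N) => nN; first exact: Tu_in nN Sny.
  exfalso; move: AB; rewrite -subset0 => /(_ y) h; apply: h; split => //; apply: (rB y) => /=.
  apply: le_lt_trans (hS _ _ Sny) _; apply: le_lt_trans _ hN.
  by rewrite lef_pV2 ?posrE // ler_nat ltnW.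
have [z [Tz cz]] := Tu_compact (N:=N) cS PF FT.
by exists z; split => //; right; apply: Tu_sub Tz.
Qed.
End Met.

Definition gens (A : set G) : set G :=
  (fun p : G * bool => if p.2 then p.1 else inv p.1) @` (A `*` [set: bool]).

Fixpoint W (A : set G) (m : nat) : set G :=
  match m with 0 => [set e] | m'.+1 => (fun p : G * G => mul p.1 p.2) @` (gens A `*` W A m') end.

Lemma img_countable (T U : Type) (f : T -> U) (A : set T) : countable A -> countable (f @` A).
Proof. by move=> cA; apply: card_le_trans (card_image_le f A) cA. Qed.

Lemma W_countable A m : countable A -> countable (W A m).
Proof.
move=> cA; elim: m => [|m IH] /=; first exact: countable1.
apply: img_countable; apply: countableX => //.
by apply: img_countable; apply: countableX => //; apply: countableP.
Qed.

Lemma inv1 : inv e = e. Proof. by rewrite -[LHS]mulg1 mulVg. Qed.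

Lemma W1 A x : gens A x -> W A 1 x.
Proof. by move=> gx; exists (x, e) => //=; rewrite mulg1. Qed.

Lemma gens_inv A x : gens A x -> gens A (inv x).
Proof.
case=> -[a [|]] [/= Aa _] <-; first by exists (a, false).
by exists (a, true) => //=; rewrite invK.
Qed.

Lemma Wmul A m x y : W A m x -> (\bigcup_k W A k) y -> (\bigcup_k W A k) (mul x y).
Proof.
elim: m x => [|m IH] x /=; first by move=> ->; rewrite mul1g.
case=> -[a w] [/= ga Ww] <- /(IH _ Ww) [k _ Wk].
exists k.+1 => //=; exists (a, mul w y) => //=; by rewrite mulA.
Qed.

Lemma Winv A m x : W A m x -> (\bigcup_k W A k) (inv x).
Proof.
elim: m x => [|m IH] x /=; first by move=> ->; rewrite inv1; exists 0%N.
case=> -[a w] [/= ga Ww] <-; rewrite invM.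
have [k _ Wk] := IH _ Ww; apply: (Wmul Wk).
by exists 1%N => //; apply: W1; apply: gens_inv.
Qed.

Lemma gen_words A : gen A = \bigcup_m W A m.
Proof.
apply/seteqP; split.
  apply: gen_min; last by move=> x Ax; exists 1%N => //; apply: W1; exists (x, true).
  split; first by exists 0%N.
    by move=> x y [m _ Wx] Uy; apply: (Wmul Wx).
  by move=> x [m _ Wx]; apply: (Winv Wx).
move=> x [m _]; elim: m x => [|m IH] x /=; first by move=> ->; case: (gen_subg A).
case=> -[a w] [/= ga Ww] <-; case: (gen_subg A) => _ hm hi; apply: hm; last exact: IH.
case: ga => -[b [|]] [/= Ab _] <-; first exact: gen_incl.
by apply: hi; apply: gen_incl.
Qed.

Lemma gen_countable A : countable A -> countable (gen A).
Proof.
move=> cA; rewrite gen_words; apply: bigcup_countable => //.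
by move=> m _; apply: W_countable.
Qed.
End Grp.

Lemma countable_Ksigma (G : topologicalType) (mul : G -> G -> G) (inv : G -> G) (e : G)
  (H : set G) : countable H -> K_sigma H.
Proof.
case/countable_injP => g ig.
exists (fun n => [set x | H x /\ g x = n]); split.
  move=> n; case: (pselect (exists x, H x /\ g x = n)) => [[x [Hx gx]]|nx].
    have -> : [set x | H x /\ g x = n] = [set x] by apply/seteqP; split => y /=;
      [case=> Hy gy; apply: ig; [exact: mem_set|exact: mem_set|by rewrite gx gy] | move=> ->].
    exact: compact_set1.
  have -> : [set x | H x /\ g x = n] = set0 by apply/seteqP; split => y //= hy; apply: nx; exists y.
  exact: compact0.
by apply/seteqP; split => [y [n _ []]|y Hy] //; exists (g y).
Qed.

Lemma pcont (G : topologicalType) (mul : G -> G -> G) (inv : G -> G) (e : G) :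
  topological_group mul inv e -> continuous (fun p : G * G => mul (inv p.1) p.2).
Proof.
move=> Hg p.
have cm : continuous (fun p : G * G => mul p.1 p.2) by case: Hg.
apply: (@continuous_comp _ _ _ (fun x : G*G => (inv x.1, x.2)) (fun x => mul x.1 x.2)); last exact: cm.
apply: cvg_pair; last exact: cvg_snd.
apply: (@continuous_comp _ _ _ fst inv); last exact: (inv_cont Hg).
exact: (@cvg_fst _ _ (nbhs p.1) (nbhs p.2) _).
Qed.

Lemma lcont (G : topologicalType) (mul : G -> G -> G) (inv : G -> G) (e : G) c :
  topological_group mul inv e -> continuous (fun y => mul c y).
Proof.
move=> Hg; apply: (mul_cont Hg); first exact: cst_continuous.
move=> y; exact: cvg_id.
Qed.

Definition pt (T : topologicalType) (x : T) : Type := T.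
HB.instance Definition _ (T : topologicalType) (x : T) := Topological.copy (@pt T x) T.
HB.instance Definition _ (T : topologicalType) (x : T) := isPointed.Build (@pt T x) x.
Lemma cc (T : topologicalType) (x : T) (A : set T) : compact A -> cover_compact A.
Proof. move=> cA. have := @compact_cover (@pt T x). move=> h. have : @compact (@pt T x) A by exact: cA.
rewrite h. exact. Qed.

Theorem mainTheorem8 (G : topologicalType) (mul : G -> G -> G) (inv : G -> G) (e : G) :
  topological_group mul inv e -> polish_space G ->
  ((forall H : set G, is_subgroup mul inv e H -> K_sigma H ->
      compactly_generated mul inv e H) <->
   (forall H : set G, is_subgroup mul inv e H -> countable H ->
      compactly_generated mul inv e H)).
Proof.
move=> Hg [_ [d [dpos dsym dtri dopen _]]]; split.
  by move=> hK H sH cH; apply: hK => //; exact: countable_Ksigma.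
move=> hC H sH [K [cK UK]].
have KH n : K n `<=` H by move=> x Kx; rewrite -UK; exists n.
pose eps n : Rdefinitions.R := (n.+1%:R)^-1.
have eps0 n : 0 < eps n by rewrite /eps invr_gt0 ltr0n.
pose V n (x : G) := [set y | d e (mul (inv x) y) < eps n].
have hF n : exists F : {fset G}, (forall x, x \in F -> K n x) /\
    K n `<=` \bigcup_(x in [set` F]) V n x.
  have hcc : cover_compact (K n) := cc e (cK n).
  have [] := hcc G (K n) (V n).
  - move=> x _; apply: (open_comp (f := fun y => mul (inv x) y) (D := [set y | d e y < eps n])); last exact: (ball_open dtri dopen e (eps n)).
    by move=> y _; apply: (@lcont G mul inv e (inv x) Hg y).
  - move=> x Kx; exists x => //; by rewrite /V /= (mulVg Hg) (dxx dpos).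
  - move=> F FK cov; exists F; split => // x Fx; exact: set_mem (FK x Fx).
have [F hF'] := choice hF.
pose A := \bigcup_n [set` F n].
have cA : countable A.
  apply: bigcup_countable => // n _; exact: countable_fset.
have AH : A `<=` H by move=> x [n _ /= Fx]; apply: (KH n); apply: (proj1 (hF' n)).
have sC := gen_subg mul inv e A.
have [L [cL gL]] := hC _ sC (gen_countable Hg cA).
pose Sn n := (fun p : G * G => mul (inv p.1) p.2) @` (K n `*` K n) `&` [set y | d e y <= eps n].
have cSn n : compact (Sn n).
  apply: compact_closedI; last exact: (cball_closed dsym dtri dopen).
  apply: continuous_compact; last exact: compact_setX.
  by apply: continuous_subspaceT; apply: pcont Hg.
have cS : compact ([set e] `|` \bigcup_n Sn n).
  by apply: (shrink_compact dpos dopen cSn) => n y [].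
exists (L `|` ([set e] `|` \bigcup_n Sn n)); split; first exact: compactU.
have LH : L `<=` H.
  move=> x Lx; have : generated_subgroup mul inv e L x by apply: gen_incl.
  by rewrite gL; apply: gen_min.
apply/seteqP; split.
  apply: gen_min => //; move=> x [/LH //|[->|[n _ [[[a b] [Ka Kb] <-] _]]]].
    by case: sH.
  case: sH => _ hm hi; apply: hm; [apply: hi|]; [exact: (KH n) | exact: (KH n)].
move=> x Hx; rewrite -UK in Hx; case: Hx => n _ Kx.
have [y /= Fy Vy] := proj2 (hF' n) x Kx.
have Ky := proj1 (hF' n) y Fy.
case: (gen_subg mul inv e (L `|` ([set e] `|` \bigcup_n Sn n))) => _ hm _.
rewrite -(mulKVg Hg y x); apply: hm.
  have : gen mul inv e L y.
    by rewrite /gen gL; apply: gen_incl; exists n.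
  apply: gen_min; first exact: gen_subg.
  by move=> z Lz; apply: gen_incl; left.
apply: gen_incl; right; right; exists n => //; split.
  by exists (y, x).
by rewrite /=; apply: ltW.
Qed.
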